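(* Let $G$ be a finite GVZ-group with $|\mathrm{cd}(G)|=2$, and let $\{X_1,\dots,X_n\}=\{Z(\psi):\psi\in\mathrm{nl}(G)\}$ be the collection of centres of non-linear irreducible characters of $G$. Let $\chi\in\mathrm{nl}(G)$ and $1\le i\le n$. Then $Z(\chi)=X_i$ if and only if $[X_i,G]\subseteq\ker\chi$.
   Context: All groups are finite. $\mathrm{Irr}(G)$ is the set of complex irreducible characters of $G$, $\mathrm{nl}(G)$ the set of non-linear irreducible characters, and $\mathrm{cd}(G)=\{\chi(1):\chi\in\mathrm{Irr}(G)\}$. For a character $\chi$, $Z(\chi)=\{g\in G: |\chi(g)|=\chi(1)\}$. A nonabelian group $G$ is a GVZ-group if for every $\chi\in\mathrm{Irr}(G)$ we have $\chi(g)=0$ for all $g\in G\setminus Z(\chi)$. *)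

(* Defs.v *)
From HB Require Import structures.
From mathcomp Require Import all_boot all_order all_algebra all_fingroup all_solvable all_field all_character.
Set Implicit Arguments. Unset Strict Implicit. Unset Printing Implicit Defensive.
Import GroupScope GRing.Theory Num.Theory.
Local Open Scope ring_scope.

Definition cd (gT : finGroupType) (G : {group gT}) : seq algC :=
  undup [seq 'chi[G]_i 1%g | i : Iirr G].

Definition nonlinear_irr (gT : finGroupType) (G : {group gT}) (i : Iirr G) : bool :=
  'chi[G]_i 1%g != 1.

Definition GVZ (gT : finGroupType) (G : {group gT}) : Prop :=
  ~~ abelian G /\
  forall (i : Iirr G) (g : gT), g \in G -> g \notin ('Z('chi[G]_i))%CF -> 'chi[G]_i g = 0.

(* Main.v *)
Require Import Defs.
From mathcomp Require Import all_boot all_order all_algebra all_fingroup all_solvable all_field all_character.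
Import GroupScope GRing.Theory Num.Theory.
Local Open Scope ring_scope.

Lemma gvz_card (gT : finGroupType) (G : {group gT}) (HGVZ : GVZ G) (i : Iirr G) :
  #|G|%:R = #|'Z('chi[G]_i)%CF|%:R * ('chi[G]_i 1%g) ^+ 2 :> algC.
Proof.
have on: 'chi_i \in 'CF(G, 'Z('chi[G]_i)%CF).
  apply/cfun_onP => x nZ; case Gx: (x \in G); first exact: HGVZ.2 _ _ Gx nZ.
  by rewrite cfun0 ?Gx.
have := cfnormE on; rewrite cfnorm_irr.
have sZG := cfcenter_sub 'chi[G]_i.
rewrite (eq_bigr (fun _ => ('chi_i 1%g) ^+ 2)); last first.
  move=> x Zx; have := Zx; rewrite (irr_cfcenterE i (subsetP sZG x Zx)) => /eqP ->.
  by [].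
rewrite sumr_const => h.
have G0 : (#|G|%:R : algC) != 0 by rewrite pnatr_eq0 -lt0n cardG_gt0.
set c := _ ^+ 2 in h *.
have -> : #|'Z('chi_i)%CF|%:R * c = #|G|%:R * (#|G|%:R^-1 * (c *+ #|'Z('chi_i)%CF|))
  by rewrite mulVKf // mulr_natl.
by rewrite -h mulr1.
Qed.

Lemma cd2_deg (gT : finGroupType) (G : {group gT}) (Hcd : size (cd G) = 2%N)
  (chi psi : Iirr G) (Hchi : nonlinear_irr chi) (Hpsi : nonlinear_irr psi) :
  'chi[G]_chi 1%g = 'chi[G]_psi 1%g.
Proof.
apply/eqP/negPn/negP => ne.
have : (size [:: (1%R : algC); 'chi[G]_chi 1%g; 'chi[G]_psi 1%g] <= size (cd G))%N.
  apply: uniq_leq_size.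
    rewrite /= !inE negb_or ne andbT.
    by rewrite !(eq_sym 1); move: Hchi Hpsi; rewrite /nonlinear_irr => -> ->.
  move=> x; rewrite !inE /cd mem_undup => /or3P[] /eqP ->; apply/mapP.
  - by exists 0; rewrite ?mem_enum // irr0 cfun11.
  - by exists chi; rewrite ?mem_enum.
  - by exists psi; rewrite ?mem_enum.
by rewrite Hcd.
Qed.

Theorem mainTheorem8 (gT : finGroupType) (G : {group gT})
  (HGVZ : GVZ G) (Hcd : size (cd G) = 2%N)
  (chi psi : Iirr G) (Hchi : nonlinear_irr chi) (Hpsi : nonlinear_irr psi) :
  ('Z('chi[G]_chi))%CF = ('Z('chi[G]_psi))%CF <->
  [~: ('Z('chi[G]_psi))%CF, G] \subset cfker 'chi[G]_chi.
Proof.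
have nKG : G \subset 'N(cfker 'chi[G]_chi) by apply: normal_norm; apply: cfker_normal.
have sZG := cfcenter_sub 'chi[G]_psi.
have sZG' := cfcenter_sub 'chi[G]_chi.
split.
  move=> <-; rewrite -quotient_cents2 ?(subset_trans _ nKG) //.
  have := cfcenter_subset_center ('chi[G]_chi).
  by move/subset_trans; apply; rewrite subIset // subxx orbT.
move=> hc.
have sub : 'Z('chi[G]_psi)%CF \subset 'Z('chi[G]_chi)%CF.
  have sKZ : cfker 'chi[G]_chi \subset 'Z('chi[G]_chi)%CF.
    exact: normal_sub (cfker_center_normal _).
  rewrite -(quotientSGK (subset_trans sZG nKG) sKZ) cfcenter_eq_center.
  rewrite subsetI quotientS //= -/(cfker _).
  by rewrite quotient_cents2 ?(subset_trans sZG nKG).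
apply/eqP; rewrite eq_sym eqEcard sub /=.
have e := @gvz_card _ _ HGVZ chi; rewrite (@gvz_card _ _ HGVZ psi) (@cd2_deg _ _ Hcd _ _ Hpsi Hchi) in e.
have d0 : ('chi[G]_chi 1%g) ^+ 2 != 0 by rewrite expf_neq0 // irr1_neq0.
by move/(mulIf d0)/eqP: e; rewrite eqr_nat => /eqP ->.
Qed.
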